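(* Let $G$ be one of the sequent calculi $\mathbf{GE},\mathbf{GM},\mathbf{GMC},\mathbf{GEN},\mathbf{GMN},\mathbf{GK},\mathbf{GEC},\mathbf{GECN},\mathbf{GCE},\mathbf{GCM},\mathbf{GCMC},\mathbf{GCEN},\mathbf{GCMN},\mathbf{GCK},\mathbf{GCKID},\mathbf{GCKCEM},\mathbf{GCKCEMID}$, and let $L=\{\phi : G\vdash\ \Rightarrow\phi\}$ be its logic. Then $G$ has ULIP iff $L$ has ULIP, and $G$ has UIP iff $L$ has UIP.
   Context: Languages: $\mathcal{L}_\Box$ (atoms, $\bot$, $\wedge,\vee,\to$, unary $\Box$) for the calculi whose name does not start with $\mathbf{GC}$, and $\mathcal{L}_\triangleright$ (atoms, $\bot$, $\wedge,\vee,\to$, binary $\triangleright$) otherwise. $\top:=\bot\to\bot$, $\neg A:=A\to\bot$. Positive/negative variables: $V^+(p)=\{p\}$, $V^-(p)=\varnothing$; $V^\pm(\bot)=\varnothing$; $V^\pm(\phi\odot\psi)=V^\pm(\phi)\cup V^\pm(\psi)$ for $\odot\in\{\wedge,\vee\}$; $V^+(\phi\to\psi)=V^-(\phi)\cup V^+(\psi)$, $V^-(\phi\to\psi)=V^+(\phi)\cup V^-(\psi)$; $V^\pm(\Box\phi)=V^\pm(\phi)$; $V^+(\phi\triangleright\psi)=V^-(\phi)\cup V^+(\psi)$, $V^-(\phi\triangleright\psi)=V^+(\phi)\cup V^-(\psi)$; $V=V^+\cup V^-$. $p^\circ$-free means $p\notin V^\circ$; $\diamond$ is the sign opposite to $\circ\in\{+,-\}$.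 Sequents $S=\Gamma\Rightarrow\Delta$ ($\Gamma,\Delta$ finite multisets); $V^+(S)=\bigcup_{\gamma\in\Gamma}V^-(\gamma)\cup\bigcup_{\delta\in\Delta}V^+(\delta)$, $V^-(S)=\bigcup_{\gamma\in\Gamma}V^+(\gamma)\cup\bigcup_{\delta\in\Delta}V^-(\delta)$; for $S=(\Gamma\Rightarrow\Delta)$, $T=(\Pi\Rightarrow\Lambda)$, $S\cdot T=(\Gamma,\Pi\Rightarrow\Delta,\Lambda)$. $G$ has ULIP if for every sequent $S$, atom $p$, $\circ\in\{+,-\}$ there is a $p^\circ$-free formula $\theta$ with $V^\dagger(\theta)\subseteq V^\dagger(S)$ for both $\dagger$, $G\vdash S\cdot(\theta\Rightarrow)$, and for every sequent $\Gamma\Rightarrow\Delta$ with $p\notin V^\diamond(\Gamma\Rightarrow\Delta)$, $G\vdash S\cdot(\Gamma\Rightarrow\Delta)$ implies $G\vdash\Gamma\Rightarrow\theta,\Delta$. UIP for $G$: same without polarities ($\theta$ $p$-free, $V(\theta)\subseteq V(S)$, $\Gamma\Rightarrow\Delta$ with $p\notin V(\Gamma\Rightarrow\Delta)$). ULIP for a logic $L$: for every formula $\phi$, atom $p$, $\circ$, there are $p^\circ$-free $\forall^\circ p\,\phi$, $\exists^\circ p\,\phi$ with $V^\dagger(\cdot)\subseteq V^\dagger(\phi)$ such that $L\vdash\forall^\circ p\,\phi\to\phi$; for $p^\circ$-free $\psi$, $L\vdash\psi\to\phi$ implies $L\vdash\psi\to\forall^\circ p\,\phi$; $L\vdash\phi\to\exists^\circ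 p\,\phi$; for $p^\circ$-free $\psi$, $L\vdash\phi\to\psi$ implies $L\vdash\exists^\circ p\,\phi\to\psi$. UIP for $L$: same without polarities. Calculi: $\mathbf{G3cp}$ has axioms $\Gamma,p\Rightarrow p,\Delta$ ($p$ atomic), $\Gamma,\bot\Rightarrow\Delta$ and the standard invertible context-sharing rules $L\wedge,R\wedge,L\vee,R\vee,L\to,R\to$ (e.g. $L\to$: from $\Gamma\Rightarrow\phi,\Delta$ and $\Gamma,\psi\Rightarrow\Delta$ infer $\Gamma,\phi\to\psi\Rightarrow\Delta$; $R\to$: from $\Gamma,\phi\Rightarrow\psi,\Delta$ infer $\Gamma\Rightarrow\phi\to\psi,\Delta$; $R\vee$: from $\Gamma\Rightarrow\phi,\psi,\Delta$ infer $\Gamma\Rightarrow\phi\vee\psi,\Delta$; $L\wedge$ dually; $R\wedge$, $L\vee$ two-premise). $\mathbf{G3W}=\mathbf{G3cp}$ plus left and right weakening. ''$\alpha\Leftrightarrow\beta$'' as a premise abbreviates $\alpha\Rightarrow\beta$ and $\beta\Rightarrow\alpha$. Modal rules: $(E)$ from $\phi\Leftrightarrow\psi$ infer $\Box\phi\Rightarrow\Box\psi$; $(M)$ from $\phi\Rightarrow\psi$ infer $\Box\phi\Rightarrow\Box\psi$; $(MC)$ ($n\ge1$) from $\phi_1,\dots,\phi_n\Rightarrow\psi$ infer $\Box\phi_1,\dots,\Box\phi_n\Rightarrow\Box\psi$; $(N)$ from $\Rightarrow\psi$ infer $\Rightarrow\Box\psi$; $(EC)$ ($n\ge1$) from $\phi_1,\dots,\phi_n\Rightarrow\psi$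 and $\psi\Rightarrow\phi_i$ ($1\le i\le n$) infer $\Sigma,\Box\phi_1,\dots,\Box\phi_n\Rightarrow\Box\psi,\Lambda$; $(NW)$ from $\Rightarrow\psi$ infer $\Sigma\Rightarrow\Box\psi,\Lambda$. $\mathbf{GE},\mathbf{GM},\mathbf{GMC}$ = $\mathbf{G3W}$ + $(E)$, $(M)$, $(MC)$; $\mathbf{GEN},\mathbf{GMN},\mathbf{GK}$ = these + $(N)$; $\mathbf{GEC}=\mathbf{G3cp}+(EC)$, $\mathbf{GECN}=\mathbf{GEC}+(NW)$. Conditional rules: $(CE)$ from $\phi_0\Leftrightarrow\phi_1$, $\psi_0\Leftrightarrow\psi_1$ infer $\phi_1\triangleright\psi_1\Rightarrow\phi_0\triangleright\psi_0$; $(CM)$ from $\phi_0\Leftrightarrow\phi_1$, $\psi_1\Rightarrow\psi_0$ infer the same; $(CMC)$ ($n\ge1$) from $\phi_0\Leftrightarrow\phi_i$ ($1\le i\le n$), $\psi_1,\dots,\psi_n\Rightarrow\psi_0$ infer $\phi_1\triangleright\psi_1,\dots,\phi_n\triangleright\psi_n\Rightarrow\phi_0\triangleright\psi_0$; $(CN)$ from $\Rightarrow\psi_0$ infer $\Rightarrow\phi_0\triangleright\psi_0$; $(CKID)$ ($I$ a possibly empty finite index multiset) from $\phi_0\Leftrightarrow\phi_i$ ($i\in I$), $\phi_0,\{\psi_i\}_{i\in I}\Rightarrow\psi_0$ infer $\{\phi_i\triangleright\psi_i\}_{i\in I}\Rightarrow\phi_0\triangleright\psi_0$; $(CKCEM)$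 from $\phi_0\Leftrightarrow\phi_r$ ($r\in I\cup J$), $\{\psi_i\}_{i\in I}\Rightarrow\psi_0,\{\psi_j\}_{j\in J}$ infer $\{\phi_i\triangleright\psi_i\}_{i\in I}\Rightarrow\phi_0\triangleright\psi_0,\{\phi_j\triangleright\psi_j\}_{j\in J}$; $(CKCEMID)$ as $(CKCEM)$ but with $\phi_0$ added to the antecedent of the last premise. $\mathbf{GCE},\mathbf{GCM},\mathbf{GCMC},\mathbf{GCKID},\mathbf{GCKCEM},\mathbf{GCKCEMID}$ = $\mathbf{G3W}$ + $(CE)$, $(CM)$, $(CMC)$, $(CKID)$, $(CKCEM)$, $(CKCEMID)$; $\mathbf{GCEN},\mathbf{GCMN},\mathbf{GCK}$ = $\mathbf{GCE},\mathbf{GCM},\mathbf{GCMC}$ + $(CN)$. Each $L$ so defined is a logic (contains classical tautologies, closed under substitution and modus ponens). *)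

(* Defs.v *)
From Stdlib Require Import List Permutation.
Import ListNotations.

(* A single syntax type containing both the unary box (for the
   language L_Box) and the binary conditional (for the language L_|>);
   each calculus only uses formulas of its own language (see [in_lang]). *)
Inductive form : Type :=
| Var  : nat -> form
| Bot  : form
| And  : form -> form -> form
| Or   : form -> form -> form
| Imp  : form -> form -> form
| Box  : form -> form
| Cond : form -> form -> form.

Inductive calc : Type :=
| GE | GM | GMC | GEN | GMN | GK | GEC | GECN
| GCE | GCM | GCMC | GCEN | GCMN | GCK | GCKID | GCKCEM | GCKCEMID.

Definition is_cond_calc (G : calc) : bool :=
  match G with
  | GCE | GCM | GCMC | GCEN | GCMN | GCK | GCKID | GCKCEM | GCKCEMID => true
  | _ => false
  end.

Fixpoint in_lang_b (c : bool) (A : form) : Prop :=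
  match A with
  | Var _ | Bot => True
  | And A B | Or A B | Imp A B => in_lang_b c A /\ in_lang_b c B
  | Box A => c = false /\ in_lang_b c A
  | Cond A B => c = true /\ in_lang_b c A /\ in_lang_b c B
  end.

Definition in_lang (G : calc) (A : form) : Prop := in_lang_b (is_cond_calc G) A.

(* Polarity: [occ true A p] means p ∈ V^+(A), [occ false A p] means p ∈ V^-(A). *)
Fixpoint occ (b : bool) (A : form) (p : nat) : Prop :=
  match A with
  | Var q => b = true /\ q = p
  | Bot => False
  | And A B | Or A B => occ b A p \/ occ b B p
  | Imp A B => occ (negb b) A p \/ occ b B p
  | Box A => occ b A p
  | Cond A B => occ (negb b) A p \/ occ b B p
  end.

Definition occ_any (A : form) (p : nat) : Prop := occ true A p \/ occ false A p.

(* Sequents Γ ⇒ Δ: pairs of lists, read as multisets (derivability is closed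
   under permutation of either side, see rule [d_perm]). *)
Definition sequent := (list form * list form)%type.

Definition seq_in_lang (G : calc) (S : sequent) : Prop :=
  (forall A, In A (fst S) -> in_lang G A) /\ (forall A, In A (snd S) -> in_lang G A).

Definition seq_occ (b : bool) (S : sequent) (p : nat) : Prop :=
  (exists A, In A (fst S) /\ occ (negb b) A p) \/
  (exists A, In A (snd S) /\ occ b A p).

Definition seq_occ_any (S : sequent) (p : nat) : Prop :=
  seq_occ true S p \/ seq_occ false S p.

Definition has_W (G : calc) : bool :=
  match G with GEC | GECN => false | _ => true end.
Definition has_E G := match G with GE | GEN => true | _ => false end.
Definition has_M G := match G with GM | GMN => true | _ => false end.
Definition has_MC G := match G with GMC | GK => true | _ => false end.
Definition has_N G := match G with GEN | GMN | GK => true | _ => false end.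
Definition has_EC G := match G with GEC | GECN => true | _ => false end.
Definition has_NW G := match G with GECN => true | _ => false end.
Definition has_CE G := match G with GCE | GCEN => true | _ => false end.
Definition has_CM G := match G with GCM | GCMN => true | _ => false end.
Definition has_CMC G := match G with GCMC | GCK => true | _ => false end.
Definition has_CN G := match G with GCEN | GCMN | GCK => true | _ => false end.
Definition has_CKID G := match G with GCKID => true | _ => false end.
Definition has_CKCEM G := match G with GCKCEM => true | _ => false end.
Definition has_CKCEMID G := match G with GCKCEMID => true | _ => false end.

Definition condp (x : form * form) : form := Cond (fst x) (snd x).

Inductive deriv (G : calc) : list form -> list form -> Prop :=
| d_perm : forall Γ Δ Γ' Δ', deriv G Γ Δ -> Permutation Γ Γ' -> Permutation Δ Δ' ->
    deriv G Γ' Δ'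
| d_ax : forall p Γ Δ, deriv G (Var p :: Γ) (Var p :: Δ)
| d_bot : forall Γ Δ, deriv G (Bot :: Γ) Δ
| d_Land : forall A B Γ Δ, deriv G (A :: B :: Γ) Δ -> deriv G (And A B :: Γ) Δ
| d_Rand : forall A B Γ Δ, deriv G Γ (A :: Δ) -> deriv G Γ (B :: Δ) ->
    deriv G Γ (And A B :: Δ)
| d_Lor : forall A B Γ Δ, deriv G (A :: Γ) Δ -> deriv G (B :: Γ) Δ ->
    deriv G (Or A B :: Γ) Δ
| d_Ror : forall A B Γ Δ, deriv G Γ (A :: B :: Δ) -> deriv G Γ (Or A B :: Δ)
| d_Limp : forall A B Γ Δ, deriv G Γ (A :: Δ) -> deriv G (B :: Γ) Δ ->
    deriv G (Imp A B :: Γ) Δ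
| d_Rimp : forall A B Γ Δ, deriv G (A :: Γ) (B :: Δ) -> deriv G Γ (Imp A B :: Δ)
| d_LW : forall A Γ Δ, has_W G = true -> deriv G Γ Δ -> deriv G (A :: Γ) Δ
| d_RW : forall A Γ Δ, has_W G = true -> deriv G Γ Δ -> deriv G Γ (A :: Δ)
| d_E : forall A B, has_E G = true -> deriv G [A] [B] -> deriv G [B] [A] ->
    deriv G [Box A] [Box B]
| d_M : forall A B, has_M G = true -> deriv G [A] [B] -> deriv G [Box A] [Box B]
| d_MC : forall As B, has_MC G = true -> As <> [] -> deriv G As [B] ->
    deriv G (map Box As) [Box B]
| d_N : forall B, has_N G = true -> deriv G [] [B] -> deriv G [] [Box B]
| d_EC : forall As B Σ Λ, has_EC G = true -> As <> [] -> deriv G As [B] ->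
    (forall A, In A As -> deriv G [B] [A]) ->
    deriv G (Σ ++ map Box As) (Box B :: Λ)
| d_NW : forall B Σ Λ, has_NW G = true -> deriv G [] [B] -> deriv G Σ (Box B :: Λ)
| d_CE : forall A0 A1 B0 B1, has_CE G = true ->
    deriv G [A0] [A1] -> deriv G [A1] [A0] -> deriv G [B0] [B1] -> deriv G [B1] [B0] ->
    deriv G [Cond A1 B1] [Cond A0 B0]
| d_CM : forall A0 A1 B0 B1, has_CM G = true ->
    deriv G [A0] [A1] -> deriv G [A1] [A0] -> deriv G [B1] [B0] ->
    deriv G [Cond A1 B1] [Cond A0 B0]
| d_CMC : forall (ps : list (form * form)) A0 B0, has_CMC G = true -> ps <> [] ->
    (forall x, In x ps -> deriv G [A0] [fst x] /\ deriv G [fst x] [A0]) ->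
    deriv G (map snd ps) [B0] ->
    deriv G (map condp ps) [Cond A0 B0]
| d_CN : forall A0 B0, has_CN G = true -> deriv G [] [B0] -> deriv G [] [Cond A0 B0]
| d_CKID : forall (ps : list (form * form)) A0 B0, has_CKID G = true ->
    (forall x, In x ps -> deriv G [A0] [fst x] /\ deriv G [fst x] [A0]) ->
    deriv G (A0 :: map snd ps) [B0] ->
    deriv G (map condp ps) [Cond A0 B0]
| d_CKCEM : forall (ps qs : list (form * form)) A0 B0, has_CKCEM G = true ->
    (forall x, In x (ps ++ qs) -> deriv G [A0] [fst x] /\ deriv G [fst x] [A0]) ->
    deriv G (map snd ps) (B0 :: map snd qs) ->
    deriv G (map condp ps) (Cond A0 B0 :: map condp qs)
| d_CKCEMID : forall (ps qs : list (form * form)) A0 B0, has_CKCEMID G = true ->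
    (forall x, In x (ps ++ qs) -> deriv G [A0] [fst x] /\ deriv G [fst x] [A0]) ->
    deriv G (A0 :: map snd ps) (B0 :: map snd qs) ->
    deriv G (map condp ps) (Cond A0 B0 :: map condp qs).

Definition Lthm (G : calc) (A : form) : Prop := deriv G [] [A].

(* ULIP for the calculus G (sign s: true = +, false = -). *)
Definition ULIP_calc (G : calc) : Prop :=
  forall (S : sequent) (p : nat) (s : bool), seq_in_lang G S ->
  exists th : form,
    in_lang G th /\ ~ occ s th p /\
    (forall b q, occ b th q -> seq_occ b S q) /\
    deriv G (th :: fst S) (snd S) /\
    (forall Γ Δ : list form, seq_in_lang G (Γ, Δ) -> ~ seq_occ (negb s) (Γ, Δ) p ->
       deriv G (fst S ++ Γ) (snd S ++ Δ) -> deriv G Γ (th :: Δ)).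

Definition UIP_calc (G : calc) : Prop :=
  forall (S : sequent) (p : nat), seq_in_lang G S ->
  exists th : form,
    in_lang G th /\ ~ occ_any th p /\
    (forall q, occ_any th q -> seq_occ_any S q) /\
    deriv G (th :: fst S) (snd S) /\
    (forall Γ Δ : list form, seq_in_lang G (Γ, Δ) -> ~ seq_occ_any (Γ, Δ) p ->
       deriv G (fst S ++ Γ) (snd S ++ Δ) -> deriv G Γ (th :: Δ)).

Definition ULIP_logic (G : calc) : Prop :=
  forall (phi : form) (p : nat) (s : bool), in_lang G phi ->
  exists fa ex : form,
    in_lang G fa /\ in_lang G ex /\ ~ occ s fa p /\ ~ occ s ex p /\
    (forall b q, occ b fa q -> occ b phi q) /\
    (forall b q, occ b ex q -> occ b phi q) /\
    Lthm G (Imp fa phi) /\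
    (forall psi, in_lang G psi -> ~ occ s psi p ->
       Lthm G (Imp psi phi) -> Lthm G (Imp psi fa)) /\
    Lthm G (Imp phi ex) /\
    (forall psi, in_lang G psi -> ~ occ s psi p ->
       Lthm G (Imp phi psi) -> Lthm G (Imp ex psi)).

Definition UIP_logic (G : calc) : Prop :=
  forall (phi : form) (p : nat), in_lang G phi ->
  exists fa ex : form,
    in_lang G fa /\ in_lang G ex /\ ~ occ_any fa p /\ ~ occ_any ex p /\
    (forall q, occ_any fa q -> occ_any phi q) /\
    (forall q, occ_any ex q -> occ_any phi q) /\
    Lthm G (Imp fa phi) /\
    (forall psi, in_lang G psi -> ~ occ_any psi p ->
       Lthm G (Imp psi phi) -> Lthm G (Imp psi fa)) /\
    Lthm G (Imp phi ex) /\
    (forall psi, in_lang G psi -> ~ occ_any psi p ->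
       Lthm G (Imp phi psi) -> Lthm G (Imp ex psi)).

(* Main.v *)
Require Import Defs.
From Stdlib Require Import List Permutation Bool.
Import ListNotations.

Ltac psearch n :=
  match n with
  | O => reflexivity
  | S ?m => first [ reflexivity
    | apply perm_skip; psearch m
    | (eapply perm_trans; [apply perm_swap|]; psearch m)
    | (eapply perm_trans; [apply perm_skip, perm_swap|]; psearch m)
    | (eapply perm_trans; [apply perm_skip, perm_skip, perm_swap|]; psearch m)
    ] end.
Ltac ps := psearch 6.

Lemma perm_head_in {A} (x:A) L l : Permutation L (x::l) -> In x L.
Proof. intro H. apply Permutation_in with (x::l). symmetry; auto. left; auto. Qed.

Lemma perm_split {A} (x z : A) l l' : Permutation (z :: l) (x :: l') ->
  (z = x /\ Permutation l l') \/ exists m, Permutation l (x :: m) /\ Permutation l' (z :: m).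
Proof.
  intros H. pose proof (perm_head_in _ _ _ H) as Hin.
  destruct Hin as [->|Hin].
  - left; split; auto. eapply Permutation_cons_inv; eauto.
  - right. apply in_split in Hin as [l1 [l2 ->]]. exists (l1++l2). split.
    + symmetry; apply Permutation_middle.
    + apply Permutation_cons_inv with x. rewrite <- H.
      symmetry. apply (Permutation_middle (z::l1) l2 x).
Qed.

Lemma perm_split_app {A} (x : A) l1 l2 l' : Permutation (l1 ++ l2) (x :: l') -> ~ In x l2 ->
  exists m, Permutation l1 (x :: m) /\ Permutation l' (m ++ l2).
Proof.
  intros H Hn. pose proof (perm_head_in _ _ _ H) as Hin.
  apply in_app_or in Hin. destruct Hin as [Hin|Hin]; [|contradiction].
  apply in_split in Hin as [a [b ->]]. exists (a++b). split.
  - symmetry; apply Permutation_middle.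
  - apply Permutation_cons_inv with x. rewrite <- H.
    rewrite <- app_assoc. simpl. rewrite <- app_assoc. symmetry; apply Permutation_middle.
Qed.

Ltac noin HP := apply perm_head_in in HP; simpl in HP;
  first [ contradiction
        | destruct HP as [HP|[]]; discriminate
        | apply in_map_iff in HP; destruct HP as [? [HP _]]; unfold condp in HP; discriminate
        | destruct HP as [HP|HP]; [discriminate| apply in_map_iff in HP; destruct HP as [? [HP _]]; unfold condp in HP; discriminate] ].

Lemma notin_mapBox X As : (forall A, X <> Box A) -> ~ In X (map Box As).
Proof. intros H Hi. apply in_map_iff in Hi as [a [<- _]]. eapply H; eauto. Qed.

Lemma wkL G Γ Δ A : deriv G Γ Δ -> deriv G (A::Γ) Δ.
Proof.
  intro H. destruct (has_W G) eqn:HW. { apply d_LW; auto. }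
  revert A. induction H; intro Z0.
  - eapply d_perm; [apply (IHderiv Z0) | apply perm_skip; eauto | eauto].
  - eapply d_perm; [apply (d_ax _ p (Z0::Γ) Δ) | ps | ps].
  - eapply d_perm; [apply (d_bot _ (Z0::Γ) Δ) | ps | ps].
  - apply (d_perm G (And A B :: Z0 :: Γ) Δ); [apply d_Land; eapply d_perm; [apply (IHderiv Z0)| ps | reflexivity] | ps | ps].
  - apply d_Rand; auto.
  - apply (d_perm G (Or A B :: Z0 :: Γ) Δ); [apply d_Lor; [eapply d_perm; [apply (IHderiv1 Z0)| ps | reflexivity]|eapply d_perm; [apply (IHderiv2 Z0)| ps | reflexivity]] | ps | ps].
  - apply d_Ror; auto.
  - apply (d_perm G (Imp A B :: Z0 :: Γ) Δ); [apply d_Limp; [eauto|eapply d_perm; [apply (IHderiv2 Z0)| ps | reflexivity]] | ps | ps].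
  - apply d_Rimp. eapply d_perm; [apply (IHderiv Z0)| ps | reflexivity].
  - congruence.
  - congruence.
  - destruct G; discriminate.
  - destruct G; discriminate.
  - destruct G; discriminate.
  - destruct G; discriminate.
  - apply (d_EC G As B (Z0::Σ) Λ); auto.
  - apply (d_NW G B (Z0::Σ) Λ); auto.
  - destruct G; discriminate.
  - destruct G; discriminate.
  - destruct G; discriminate.
  - destruct G; discriminate.
  - destruct G; discriminate.
  - destruct G; discriminate.
  - destruct G; discriminate.
Qed.

Lemma wkR G Γ Δ A : deriv G Γ Δ -> deriv G Γ (A::Δ).
Proof.
  intro H. destruct (has_W G) eqn:HW. { apply d_RW; auto. }
  revert A. induction H; intro Z0.
  - eapply d_perm; [apply (IHderiv Z0) | eauto | apply perm_skip; eauto].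
  - eapply d_perm; [apply (d_ax _ p Γ (Z0::Δ)) | ps | ps].
  - eapply d_perm; [apply (d_bot _ Γ (Z0::Δ)) | ps | ps].
  - apply d_Land; auto.
  - apply (d_perm G Γ (And A B :: Z0 :: Δ)); [apply d_Rand; [eapply d_perm; [apply (IHderiv1 Z0)| reflexivity | ps]|eapply d_perm; [apply (IHderiv2 Z0)| reflexivity | ps]] | ps | ps].
  - apply d_Lor; auto.
  - apply (d_perm G Γ (Or A B :: Z0 :: Δ)); [apply d_Ror; eapply d_perm; [apply (IHderiv Z0)| reflexivity | ps] | ps | ps].
  - apply d_Limp; [eapply d_perm; [apply (IHderiv1 Z0)| reflexivity | ps]|eauto].
  - apply (d_perm G Γ (Imp A B :: Z0 :: Δ)); [apply d_Rimp; eapply d_perm; [apply (IHderiv Z0)| reflexivity | ps] | ps | ps].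
  - congruence.
  - congruence.
  - destruct G; discriminate.
  - destruct G; discriminate.
  - destruct G; discriminate.
  - destruct G; discriminate.
  - eapply d_perm; [apply (d_EC G As B Σ (Z0::Λ)); auto | ps | ps].
  - eapply d_perm; [apply (d_NW G B Σ (Z0::Λ)); auto | ps | ps].
  - destruct G; discriminate.
  - destruct G; discriminate.
  - destruct G; discriminate.
  - destruct G; discriminate.
  - destruct G; discriminate.
  - destruct G; discriminate.
  - destruct G; discriminate.
Qed.

Ltac sp HP := let E1 := fresh "E" in let E2 := fresh "E" in
  let m := fresh "m" in let Hm1 := fresh "Hm" in let Hm2 := fresh "Hm" in
  destruct (perm_split _ _ _ _ HP) as [[E1 E2]|[m [Hm1 Hm2]]];
  [try discriminate; try (injection E1; intros; subst) | ].
Ltac psr := do 4 try (match goal with H : Permutation ?x _ |- _ => is_var x; progress rewrite H end); ps.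

Lemma inv_Rimp G Γ Δ : deriv G Γ Δ -> forall X Y Δ', Permutation Δ (Imp X Y :: Δ') -> deriv G (X::Γ) (Y::Δ').
Proof.
  induction 1; intros X Y D' HP.
  - eapply d_perm; [apply (IHderiv X Y D'); etransitivity; eauto | apply perm_skip; auto | reflexivity].
  - sp HP. apply (d_perm G (Var p :: X :: Γ) (Var p :: Y :: m)); [apply d_ax|ps|psr].
  - apply (d_perm G (Bot :: X :: Γ) (Y::D')); [apply d_bot|ps|psr].
  - apply (d_perm G (And A B :: X :: Γ) (Y::D')); [apply d_Land; eapply d_perm; [apply (IHderiv X Y D' HP)|ps|reflexivity]|ps|reflexivity].
  - sp HP. apply (d_perm G (X::Γ) (And A B :: Y :: m)); [apply d_Rand; [eapply d_perm; [apply (IHderiv1 X Y (A::m)); psr | reflexivity | psr]|eapply d_perm; [apply (IHderiv2 X Y (B::m)); psr | reflexivity | psr]]|reflexivity|psr].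
  - apply (d_perm G (Or A B :: X :: Γ) (Y::D')); [apply d_Lor; [eapply d_perm; [apply (IHderiv1 X Y D' HP)|psr|reflexivity]|eapply d_perm; [apply (IHderiv2 X Y D' HP)|psr|reflexivity]]|psr|reflexivity].
  - sp HP. apply (d_perm G (X::Γ) (Or A B :: Y :: m)); [apply d_Ror; (eapply d_perm; [apply (IHderiv X Y (A::B::m)); psr | reflexivity | psr])|reflexivity|psr].
  - apply (d_perm G (Imp A B :: X :: Γ) (Y::D')); [apply d_Limp; [eapply d_perm; [apply (IHderiv1 X Y (A::D')); psr|reflexivity|psr] | eapply d_perm; [apply (IHderiv2 X Y D' HP)|ps|reflexivity]]|ps|reflexivity].
  - sp HP.
    + eapply d_perm; [eauto|reflexivity|apply perm_skip; auto].
    + apply (d_perm G (X::Γ) (Imp A B :: Y :: m)); [apply d_Rimp; eapply d_perm; [apply (IHderiv X Y (B::m)); psr|ps|psr]|reflexivity|psr].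
  - apply (d_perm G (A :: X :: Γ) (Y::D')); [apply d_LW; auto|ps|reflexivity].
  - sp HP.
    + apply d_LW; auto; apply d_RW; auto; eapply d_perm; [eauto|reflexivity|auto].
    + apply (d_perm G (X::Γ) (A :: Y :: m)); [apply d_RW; auto|reflexivity|psr].
  - noin HP.
  - noin HP.
  - noin HP.
  - noin HP.
  - sp HP. apply (d_perm G ((X::Σ) ++ map Box As) (Box B :: Y :: m)); [apply d_EC; auto|reflexivity|psr].
  - sp HP. apply (d_perm G (X::Σ) (Box B :: Y :: m)); [apply d_NW; auto|reflexivity|psr].
  - noin HP.
  - noin HP.
  - noin HP.
  - noin HP.
  - noin HP.
  - noin HP.
  - noin HP.
Qed.

Lemma inv_Ror G Γ Δ : deriv G Γ Δ -> forall X Y Δ', Permutation Δ (Or X Y :: Δ') -> deriv G Γ (X::Y::Δ').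
Proof.
  induction 1; intros X Y D' HP.
  - eapply d_perm; [apply (IHderiv X Y D'); etransitivity; eauto | auto | reflexivity].
  - sp HP. apply (d_perm G (Var p :: Γ) (Var p :: X :: Y :: m)); [apply d_ax|psr|psr].
  - apply d_bot.
  - apply d_Land; auto.
  - sp HP. apply (d_perm G Γ (And A B :: X :: Y :: m)); [apply d_Rand; [eapply d_perm; [apply (IHderiv1 X Y (A::m)); psr | reflexivity | psr]|eapply d_perm; [apply (IHderiv2 X Y (B::m)); psr | reflexivity | psr]]|reflexivity|psr].
  - apply d_Lor; auto.
  - sp HP.
    + eapply d_perm; [eauto|reflexivity|psr].
    + apply (d_perm G Γ (Or A B :: X :: Y :: m)); [apply d_Ror; (eapply d_perm; [apply (IHderiv X Y (A::B::m)); psr | reflexivity | psr])|reflexivity|psr].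
  - apply d_Limp; [eapply d_perm; [apply (IHderiv1 X Y (A::D')); psr|reflexivity|psr] | auto].
  - sp HP. apply (d_perm G Γ (Imp A B :: X :: Y :: m)); [apply d_Rimp; eapply d_perm; [apply (IHderiv X Y (B::m)); psr|psr|psr]|reflexivity|psr].
  - apply d_LW; auto.
  - sp HP.
    + apply d_RW; auto; apply d_RW; auto; eapply d_perm; [eauto|reflexivity|auto].
    + apply (d_perm G Γ (A :: X :: Y :: m)); [apply d_RW; auto|reflexivity|psr].
  - noin HP.
  - noin HP.
  - noin HP.
  - noin HP.
  - sp HP. apply (d_perm G (Σ ++ map Box As) (Box B :: X :: Y :: m)); [apply d_EC; auto|reflexivity|psr].
  - sp HP. apply (d_perm G Σ (Box B :: X :: Y :: m)); [apply d_NW; auto|reflexivity|psr].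
  - noin HP.
  - noin HP.
  - noin HP.
  - noin HP.
  - noin HP.
  - noin HP.
  - noin HP.
Qed.

Lemma inv_Rbot G Γ Δ : deriv G Γ Δ -> forall Δ', Permutation Δ (Bot :: Δ') -> deriv G Γ Δ'.
Proof.
  induction 1; intros D' HP.
  - eapply d_perm; [apply (IHderiv D'); etransitivity; eauto | auto | reflexivity].
  - sp HP. apply (d_perm G (Var p :: Γ) (Var p :: m)); [apply d_ax|psr|psr].
  - apply d_bot.
  - apply d_Land; auto.
  - sp HP. apply (d_perm G Γ (And A B :: m)); [apply d_Rand; [eapply d_perm; [apply (IHderiv1 (A::m)); psr | reflexivity | psr]|eapply d_perm; [apply (IHderiv2 (B::m)); psr | reflexivity | psr]]|reflexivity|psr].
  - apply d_Lor; auto.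
  - sp HP. apply (d_perm G Γ (Or A B :: m)); [apply d_Ror; (eapply d_perm; [apply (IHderiv (A::B::m)); psr | reflexivity | psr])|reflexivity|psr].
  - apply d_Limp; [eapply d_perm; [apply (IHderiv1 (A::D')); psr|reflexivity|psr] | auto].
  - sp HP. apply (d_perm G Γ (Imp A B :: m)); [apply d_Rimp; eapply d_perm; [apply (IHderiv (B::m)); psr|psr|psr]|reflexivity|psr].
  - apply d_LW; auto.
  - sp HP.
    + eapply d_perm; [eauto|reflexivity|auto].
    + apply (d_perm G Γ (A :: m)); [apply d_RW; auto|reflexivity|psr].
  - noin HP.
  - noin HP.
  - noin HP.
  - noin HP.
  - sp HP. apply (d_perm G (Σ ++ map Box As) (Box B :: m)); [apply d_EC; auto|reflexivity|psr].
  - sp HP. apply (d_perm G Σ (Box B :: m)); [apply d_NW; auto|reflexivity|psr].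
  - noin HP.
  - noin HP.
  - noin HP.
  - noin HP.
  - noin HP.
  - noin HP.
  - noin HP.
Qed.

Ltac noinapp HP := let m := fresh "m" in let H1 := fresh "Hm" in let H2 := fresh "Hm" in
  destruct (perm_split_app _ _ _ _ HP) as [m [H1 H2]];
  [ apply notin_mapBox; intros ? ?; discriminate | ].

Lemma inv_Land G Γ Δ : deriv G Γ Δ -> forall X Y Γ', Permutation Γ (And X Y :: Γ') -> deriv G (X::Y::Γ') Δ.
Proof.
  induction 1; intros X Y D' HP.
  - eapply d_perm; [apply (IHderiv X Y D'); etransitivity; eauto | reflexivity | auto].
  - sp HP. apply (d_perm G (Var p :: X :: Y :: m) (Var p :: Δ)); [apply d_ax|psr|psr].
  - sp HP. apply (d_perm G (Bot :: X :: Y :: m) Δ); [apply d_bot|psr|psr].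
  - sp HP.
    + eapply d_perm; [eauto|psr|reflexivity].
    + apply (d_perm G (And A B :: X :: Y :: m) Δ); [apply d_Land; (eapply d_perm; [apply (IHderiv X Y (A::B::m)); psr | psr | reflexivity])|psr|reflexivity].
  - apply d_Rand; auto.
  - sp HP. apply (d_perm G (Or A B :: X :: Y :: m) Δ); [apply d_Lor; [eapply d_perm; [apply (IHderiv1 X Y (A::m)); psr | psr | reflexivity]|eapply d_perm; [apply (IHderiv2 X Y (B::m)); psr | psr | reflexivity]]|psr|reflexivity].
  - apply d_Ror; auto.
  - sp HP. apply (d_perm G (Imp A B :: X :: Y :: m) Δ); [apply d_Limp; [apply (IHderiv1 X Y m); psr|eapply d_perm; [apply (IHderiv2 X Y (B::m)); psr | psr | reflexivity]]|psr|reflexivity].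
  - apply d_Rimp. eapply d_perm; [apply (IHderiv X Y (A::D')); psr|psr|reflexivity].
  - sp HP.
    + apply d_LW; auto; apply d_LW; auto; eapply d_perm; [eauto|auto|reflexivity].
    + apply (d_perm G (A :: X :: Y :: m) Δ); [apply d_LW; auto|psr|reflexivity].
  - apply d_RW; auto.
  - noin HP.
  - noin HP.
  - noin HP.
  - noin HP.
  - noinapp HP. apply (d_perm G ((X::Y::m) ++ map Box As) (Box B :: Λ)); [apply d_EC; auto|simpl; psr|reflexivity].
  - apply d_NW; auto.
  - noin HP.
  - noin HP.
  - noin HP.
  - noin HP.
  - noin HP.
  - noin HP.
  - noin HP.
Qed.

Lemma inv_Limp1 G Γ Δ : deriv G Γ Δ -> forall X Y Γ', Permutation Γ (Imp X Y :: Γ') -> deriv G Γ' (X::Δ).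
Proof.
  induction 1; intros X Y D' HP.
  - eapply d_perm; [apply (IHderiv X Y D'); etransitivity; eauto | reflexivity | auto].
  - sp HP. apply (d_perm G (Var p :: m) (Var p :: X :: Δ)); [apply d_ax|psr|psr].
  - sp HP. apply (d_perm G (Bot :: m) (X::Δ)); [apply d_bot|psr|psr].
  - sp HP. apply (d_perm G (And A B :: m) (X::Δ)); [apply d_Land; (apply (IHderiv X Y (A::B::m)); psr)|psr|reflexivity].
  - apply (d_perm G D' (And A B :: X :: Δ)); [apply d_Rand; [eapply d_perm; [apply (IHderiv1 X Y D' HP)|reflexivity|psr]|eapply d_perm; [apply (IHderiv2 X Y D' HP)|reflexivity|psr]]|reflexivity|psr].
  - sp HP. apply (d_perm G (Or A B :: m) (X::Δ)); [apply d_Lor; [apply (IHderiv1 X Y (A::m)); psr|apply (IHderiv2 X Y (B::m)); psr]|psr|reflexivity].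
  - apply (d_perm G D' (Or A B :: X :: Δ)); [apply d_Ror; eapply d_perm; [apply (IHderiv X Y D' HP)|reflexivity|psr]|reflexivity|psr].
  - sp HP.
    + apply (d_perm G Γ (X::Δ)); [exact H|exact E0|reflexivity].
    + apply (d_perm G (Imp A B :: m) (X::Δ)); [apply d_Limp; [eapply d_perm; [apply (IHderiv1 X Y m); psr|reflexivity|psr]|apply (IHderiv2 X Y (B::m)); psr]|psr|reflexivity].
  - apply (d_perm G D' (Imp A B :: X :: Δ)); [apply d_Rimp; eapply d_perm; [apply (IHderiv X Y (A::D')); psr|reflexivity|psr]|reflexivity|psr].
  - sp HP.
    + apply d_RW; auto; eapply d_perm; [eauto|auto|reflexivity].
    + apply (d_perm G (A :: m) (X::Δ)); [apply d_LW; [auto|apply (IHderiv X Y m); psr]|psr|reflexivity].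
  - apply (d_perm G D' (A :: X :: Δ)); [apply d_RW; [auto|apply (IHderiv X Y D' HP)]|reflexivity|psr].
  - noin HP.
  - noin HP.
  - noin HP.
  - noin HP.
  - noinapp HP. apply (d_perm G (m ++ map Box As) (Box B :: X :: Λ)); [apply d_EC; auto|simpl; psr|psr].
  - apply (d_perm G D' (Box B :: X :: Λ)); [apply d_NW; auto|reflexivity|psr].
  - noin HP.
  - noin HP.
  - noin HP.
  - noin HP.
  - noin HP.
  - noin HP.
  - noin HP.
Qed.

Fixpoint conjl (l : list form) : form :=
  match l with [] => Imp Bot Bot | a :: l => And a (conjl l) end.
Fixpoint disjl (l : list form) : form :=
  match l with [] => Bot | a :: l => Or a (disjl l) end.

Lemma conj_fwd G l : forall Γ Δ, deriv G (l ++ Γ) Δ -> deriv G (conjl l :: Γ) Δ.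
Proof.
  induction l as [|a l IH]; simpl; intros Γ Δ H.
  - apply wkL; auto.
  - apply d_Land. apply (d_perm G (conjl l :: a :: Γ) Δ); [|ps|reflexivity].
    apply IH. eapply d_perm; [exact H| apply Permutation_middle |reflexivity].
Qed.

Lemma conj_inv G l : forall Γ Δ, deriv G (conjl l :: Γ) Δ -> deriv G (l ++ Γ) Δ.
Proof.
  induction l as [|a l IH]; simpl; intros Γ Δ H.
  - eapply inv_Rbot; [eapply inv_Limp1; [exact H|reflexivity]|reflexivity].
  - pose proof (inv_Land _ _ _ H a (conjl l) Γ (Permutation_refl _)) as H'. clear H. rename H' into H.
    apply (d_perm G (l ++ a :: Γ) Δ); [|symmetry; apply Permutation_middle|reflexivity].
    apply IH. eapply d_perm; [exact H|ps|reflexivity].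
Qed.

Lemma disj_fwd G l : forall Γ Δ, deriv G Γ (l ++ Δ) -> deriv G Γ (disjl l :: Δ).
Proof.
  induction l as [|a l IH]; simpl; intros Γ Δ H.
  - apply wkR; auto.
  - apply d_Ror. apply (d_perm G Γ (disjl l :: a :: Δ)); [|reflexivity|ps].
    apply IH. eapply d_perm; [exact H|reflexivity| apply Permutation_middle].
Qed.

Lemma disj_inv G l : forall Γ Δ, deriv G Γ (disjl l :: Δ) -> deriv G Γ (l ++ Δ).
Proof.
  induction l as [|a l IH]; simpl; intros Γ Δ H.
  - eapply inv_Rbot; [exact H|reflexivity].
  - pose proof (inv_Ror _ _ _ H a (disjl l) Δ (Permutation_refl _)) as H'. clear H. rename H' into H.
    apply (d_perm G Γ (l ++ a :: Δ)); [|reflexivity|symmetry; apply Permutation_middle].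
    apply IH. eapply d_perm; [exact H|reflexivity|ps].
Qed.

Lemma lang_conj c l : (forall A, In A l -> in_lang_b c A) -> in_lang_b c (conjl l).
Proof. induction l; simpl; intros H; auto. Qed.
Lemma lang_disj c l : (forall A, In A l -> in_lang_b c A) -> in_lang_b c (disjl l).
Proof. induction l; simpl; intros H; auto. Qed.

Lemma occ_conj b l q : occ b (conjl l) q -> exists A, In A l /\ occ b A q.
Proof. induction l; simpl; intros H. destruct H as [[]|[]]. destruct H as [H|H]; eauto.
  destruct (IHl H) as [A [? ?]]; eauto. Qed.
Lemma occ_disj b l q : occ b (disjl l) q -> exists A, In A l /\ occ b A q.
Proof. induction l; simpl; intros H. destruct H. destruct H as [H|H]; eauto.
  destruct (IHl H) as [A [? ?]]; eauto. Qed.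

Lemma seq_occ_any_iff S q : seq_occ_any S q <-> exists A, (In A (fst S) \/ In A (snd S)) /\ occ_any A q.
Proof.
  unfold seq_occ_any, seq_occ, occ_any. split.
  - intros [[[A [? ?]]|[A [? ?]]]|[[A [? ?]]|[A [? ?]]]]; exists A; simpl in *; tauto.
  - intros [A [[HA|HA] [Ho|Ho]]].
    + right; left; exists A; auto.
    + left; left; exists A; auto.
    + left; right; exists A; auto.
    + right; right; exists A; auto.
Qed.

Lemma occ_any_conj l q : occ_any (conjl l) q -> exists A, In A l /\ occ_any A q.
Proof. intros [H|H]; apply occ_conj in H as [A [? ?]]; exists A; split; auto; [left|right]; auto. Qed.
Lemma occ_any_disj l q : occ_any (disjl l) q -> exists A, In A l /\ occ_any A q.
Proof. intros [H|H]; apply occ_disj in H as [A [? ?]]; exists A; split; auto; [left|right]; auto. Qed.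
Lemma occ_any_neg A q : occ_any (Imp A Bot) q -> occ_any A q.
Proof. unfold occ_any; simpl; intros [[H|[]]|[H|[]]]; [right|left]; auto. Qed.

Lemma seq1_lang G A : in_lang G A -> seq_in_lang G ([], [A]) /\ seq_in_lang G ([A], []).
Proof. intros H; split; split; simpl; intros B HB; try destruct HB as [<-|[]]; auto; contradiction. Qed.

Lemma thm_inv G A B : Lthm G (Imp A B) -> deriv G [A] [B].
Proof. intro H. exact (inv_Rimp _ _ _ H A B [] (Permutation_refl _)). Qed.

Lemma chi_lemma G G0 D0 Γ Δ : deriv G (G0 ++ Γ) (D0 ++ Δ) ->
  Lthm G (Imp (And (conjl Γ) (Imp (disjl Δ) Bot)) (Imp (conjl G0) (disjl D0))).
Proof.
  intro Hd. apply d_Rimp, d_Rimp. apply disj_fwd. rewrite app_nil_r.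
  apply conj_fwd. apply (d_perm G (And (conjl Γ) (Imp (disjl Δ) Bot) :: G0) D0); [|apply Permutation_cons_append|reflexivity].
  apply d_Land, conj_fwd.
  apply (d_perm G (Imp (disjl Δ) Bot :: Γ ++ G0) D0); [|apply Permutation_middle|reflexivity].
  apply d_Limp; [|apply d_bot]. apply disj_fwd.
  eapply d_perm; [exact Hd|apply Permutation_app_comm|apply Permutation_app_comm].
Qed.

Lemma chi_inv G Γ Δ th : Lthm G (Imp (And (conjl Γ) (Imp (disjl Δ) Bot)) th) -> deriv G Γ (th :: Δ).
Proof.
  intro H. apply thm_inv in H.
  pose proof (inv_Land _ _ _ H _ _ [] (Permutation_refl _)) as H1.
  apply conj_inv in H1.
  pose proof (inv_Limp1 _ _ _ H1 (disjl Δ) Bot Γ) as H2.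
  assert (H3 : deriv G Γ (disjl Δ :: [th])). { apply H2. symmetry. apply Permutation_cons_append. }
  apply disj_inv in H3. eapply d_perm; [exact H3|reflexivity|].
  apply Permutation_sym, Permutation_cons_append.
Qed.

Lemma seq_in_lang_l G G0 D0 : seq_in_lang G (G0, D0) -> in_lang G (Imp (conjl G0) (disjl D0)).
Proof. intros [H1 H2]; simpl in *. unfold in_lang; simpl; split; [apply lang_conj|apply lang_disj]; auto. Qed.

Lemma seq_in_lang_chi G Γ Δ : seq_in_lang G (Γ, Δ) -> in_lang G (And (conjl Γ) (Imp (disjl Δ) Bot)).
Proof. intros [H1 H2]; simpl in *. unfold in_lang; simpl; split; [apply lang_conj|split; [apply lang_disj|]]; auto. Qed.

Lemma calc_th G G0 D0 th : Lthm G (Imp th (Imp (conjl G0) (disjl D0))) -> deriv G (th :: G0) D0.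
Proof.
  intro H. apply thm_inv in H.
  pose proof (inv_Rimp _ _ _ H _ _ [] (Permutation_refl _)) as H1.
  apply conj_inv, disj_inv in H1. rewrite app_nil_r in H1.
  eapply d_perm; [exact H1| apply Permutation_sym, Permutation_cons_append|reflexivity].
Qed.

Lemma ULIP_dir1 G : ULIP_calc G -> ULIP_logic G.
Proof.
  intros HC phi p s Hphi. destruct (seq1_lang G phi Hphi) as [S1 S2].
  destruct (HC ([], [phi]) p s S1) as [th1 [L1 [N1 [V1 [D1 I1]]]]].
  destruct (HC ([phi], []) p (negb s) S2) as [th2 [L2 [N2 [V2 [D2 I2]]]]].
  simpl in *. exists th1, (Imp th2 Bot).
  split; [auto|]. split; [unfold in_lang in *; simpl; auto|].
  split; [auto|]. split; [simpl; intros [H|[]]; auto|].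
  split.
  { intros b q H. destruct (V1 b q H) as [[A [[] _]]|[A [[<-|[]] HA]]]; auto. }
  split.
  { intros b q H. simpl in H. destruct H as [H|[]].
    destruct (V2 _ _ H) as [[A [[<-|[]] HA]]|[A [[] _]]]. rewrite negb_involutive in HA; auto. }
  split; [apply d_Rimp; auto|].
  split.
  { intros psi Hpsi Npsi Hth. apply d_Rimp. apply (I1 [psi] []).
    - apply (seq1_lang G psi Hpsi).
    - intros [[A [[<-|[]] HA]]|[A [[] _]]]. rewrite negb_involutive in HA; auto.
    - simpl. apply thm_inv; auto. }
  split.
  { apply d_Rimp, d_Rimp. apply wkR. auto. }
  { intros psi Hpsi Npsi Hth. apply d_Rimp. apply d_Limp; [|apply d_bot].
    apply (I2 [] [psi]).
    - apply (seq1_lang G psi Hpsi).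
    - intros [[A [[] _]]|[A [[<-|[]] HA]]]. rewrite negb_involutive in HA; auto.
    - simpl. apply thm_inv; auto. }
Qed.

Lemma ULIP_dir2 G : ULIP_logic G -> ULIP_calc G.
Proof.
  intros HL [G0 D0] p s HS.
  destruct (HL (Imp (conjl G0) (disjl D0)) p s (seq_in_lang_l _ _ _ HS))
    as [fa [ex [Lfa [_ [Nfa [_ [Vfa [_ [Dfa [Ufa _]]]]]]]]]].
  exists fa. split; [auto|]. split; [auto|]. split; [|split].
  - intros b q H. apply Vfa in H. simpl in H. destruct H as [H|H].
    + apply occ_conj in H. left. exact H.
    + apply occ_disj in H. right. exact H.
  - simpl. apply calc_th; auto.
  - intros Γ Δ HS2 Hno Hd. simpl in Hd. apply chi_inv. apply Ufa.
    + apply seq_in_lang_chi; auto.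
    + simpl. intros [H|[H|[]]].
      * apply occ_conj in H as [A [HA Ho]]. apply Hno. left. exists A. rewrite negb_involutive. auto.
      * apply occ_disj in H as [A [HA Ho]]. apply Hno. right. exists A. auto.
    + apply chi_lemma; auto.
Qed.

Lemma UIP_dir1 G : UIP_calc G -> UIP_logic G.
Proof.
  intros HC phi p Hphi. destruct (seq1_lang G phi Hphi) as [S1 S2].
  destruct (HC ([], [phi]) p S1) as [th1 [L1 [N1 [V1 [D1 I1]]]]].
  destruct (HC ([phi], []) p S2) as [th2 [L2 [N2 [V2 [D2 I2]]]]].
  simpl in *. exists th1, (Imp th2 Bot).
  split; [auto|]. split; [unfold in_lang in *; simpl; auto|].
  split; [auto|]. split; [intros H; apply occ_any_neg in H; auto|].
  split.
  { intros q H. apply V1, seq_occ_any_iff in H as [A [[[]|[<-|[]]] HA]]; auto. }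
  split.
  { intros q H. apply occ_any_neg, V2, seq_occ_any_iff in H as [A [[[<-|[]]|[]] HA]]; auto. }
  split; [apply d_Rimp; auto|].
  split.
  { intros psi Hpsi Npsi Hth. apply d_Rimp. apply (I1 [psi] []).
    - apply (seq1_lang G psi Hpsi).
    - intros H. apply seq_occ_any_iff in H as [A [[[<-|[]]|[]] HA]]; auto.
    - simpl. apply thm_inv; auto. }
  split.
  { apply d_Rimp, d_Rimp. apply wkR. auto. }
  { intros psi Hpsi Npsi Hth. apply d_Rimp. apply d_Limp; [|apply d_bot].
    apply (I2 [] [psi]).
    - apply (seq1_lang G psi Hpsi).
    - intros H. apply seq_occ_any_iff in H as [A [[[]|[<-|[]]] HA]]; auto.
    - simpl. apply thm_inv; auto. }
Qed.

Lemma UIP_dir2 G : UIP_logic G -> UIP_calc G.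
Proof.
  intros HL [G0 D0] p HS.
  destruct (HL (Imp (conjl G0) (disjl D0)) p (seq_in_lang_l _ _ _ HS))
    as [fa [ex [Lfa [_ [Nfa [_ [Vfa [_ [Dfa [Ufa _]]]]]]]]]].
  exists fa. split; [auto|]. split; [auto|]. split; [|split].
  - intros q H. apply Vfa in H. apply seq_occ_any_iff. simpl.
    destruct H as [[H|H]|[H|H]].
    + apply occ_conj in H as [A [? ?]]. exists A. split; [auto|right; auto].
    + apply occ_disj in H as [A [? ?]]. exists A. split; [auto|left; auto].
    + apply occ_conj in H as [A [? ?]]. exists A. split; [auto|left; auto].
    + apply occ_disj in H as [A [? ?]]. exists A. split; [auto|right; auto].
  - simpl. apply calc_th; auto.
  - intros Γ Δ HS2 Hno Hd. simpl in Hd. apply chi_inv. apply Ufa.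
    + apply seq_in_lang_chi; auto.
    + intros H. apply Hno, seq_occ_any_iff. simpl.
      destruct H as [[H|[H|[]]]|[H|[H|[]]]].
      * apply occ_conj in H as [A [? ?]]. exists A. split; [auto|left; auto].
      * apply occ_disj in H as [A [? ?]]. exists A. split; [auto|right; auto].
      * apply occ_conj in H as [A [? ?]]. exists A. split; [auto|right; auto].
      * apply occ_disj in H as [A [? ?]]. exists A. split; [auto|left; auto].
    + apply chi_lemma; auto.
Qed.

Theorem mainTheorem4 : forall G : calc,
  (ULIP_calc G <-> ULIP_logic G) /\ (UIP_calc G <-> UIP_logic G).
Proof.
  intro G. split; split; auto using ULIP_dir1, ULIP_dir2, UIP_dir1, UIP_dir2.
Qed.
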